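(* Let $\mu_Y\in\mathbb{R}$, $\sigma_Y>0$, $n\ge 2$, and let $X_1,\dots,X_n$ be i.i.d. with $X_i\sim LN(\mu_Y,\sigma_Y^2)$. With $A_n=\frac1n\sum_{i=1}^n X_i$, $H_n=n\big/\sum_{i=1}^n (1/X_i)$, $\hat k_n=\frac{n}{n-1}\left(\frac{A_n}{H_n}-1\right)$ and $k=C_v^2=\exp(\sigma_Y^2)-1$, $$\operatorname{Var}(\hat k_n)=\frac{2}{n-1}\,k^2\left(1+k+\frac{k^2}{2n}\right),\qquad \operatorname{sd}(\hat k_n)=k\sqrt{\frac{2}{n-1}\left(1+k+\frac{k^2}{2n}\right)}.$$
   Context: $X\sim LN(\mu_Y,\sigma_Y^2)$ means $\ln X\sim N(\mu_Y,\sigma_Y^2)$. For such $X$, $C_v=\sqrt{\operatorname{Var}(X)}/E[X]$ is the coefficient of variation and $k=E[X]\,E[1/X]-1$; one has $k=C_v^2=\exp(\sigma_Y^2)-1$. $\operatorname{sd}$ denotes the square root of the variance. *)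

(* Defs.v *)
(* Probability theory is not available, so the
   law of (X_1,...,X_n) i.i.d. LN(mu, sigma^2) is represented through its joint
   density, and expectations are iterated improper Riemann integrals. *)
From Stdlib Require Import Reals Lra Lia.
Open Scope R_scope.

Definition ImpInt (f : R -> R) (l : R) : Prop :=
  forall eps : R, 0 < eps ->
    exists M : R, forall a b : R, a <= - M -> M <= b ->
      exists pr : Riemann_integrable f a b, Rabs (RiemannInt pr - l) < eps.

Definition upd (v : nat -> R) (i : nat) (x : R) : nat -> R :=
  fun j => if Nat.eq_dec j i then x else v j.

(* Iterated improper integral over R^m of g, integrating the coordinates
   0, ..., m-1 (outermost = coordinate m-1); IterInt m g l means the iterated
   integral exists (every inner integral exists) and equals l. *)
Fixpoint IterInt (m : nat) (g : (nat -> R) -> R) : R -> Prop :=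
  match m with
  | O => fun l => l = g (fun _ => 0)
  | S m' => fun l =>
      exists h : R -> R, ImpInt h l /\
        forall x : R, IterInt m' (fun v => g (upd v m' x)) (h x)
  end.

Fixpoint sumR (n : nat) (f : nat -> R) : R :=
  match n with O => 0 | S n' => sumR n' f + f n' end.
Fixpoint prodR (n : nat) (f : nat -> R) : R :=
  match n with O => 1 | S n' => prodR n' f * f n' end.

(* density of LN(mu, s^2): ln X ~ N(mu, s^2), s > 0 the standard deviation *)
Definition lnpdf (mu s x : R) : R :=
  if Rlt_dec 0 x
  then / (x * s * sqrt (2 * PI)) * exp (- ((ln x - mu) ^ 2) / (2 * s ^ 2))
  else 0.

Definition joint_lnpdf (mu s : R) (n : nat) (v : nat -> R) : R :=
  prodR n (fun i => lnpdf mu s (v i)).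

Definition HasExpect (mu s : R) (n : nat) (f : (nat -> R) -> R) (l : R) : Prop :=
  IterInt n (fun v => f v * joint_lnpdf mu s n v) l.

Definition HasVar (mu s : R) (n : nat) (f : (nat -> R) -> R) (V : R) : Prop :=
  exists m1 m2 : R, HasExpect mu s n f m1 /\
    HasExpect mu s n (fun v => (f v) ^ 2) m2 /\ V = m2 - m1 ^ 2.

Definition A_n (n : nat) (v : nat -> R) : R := sumR n v / INR n.
Definition H_n (n : nat) (v : nat -> R) : R := INR n / sumR n (fun i => / v i).
Definition khat (n : nat) (v : nat -> R) : R :=
  INR n / (INR n - 1) * (A_n n v / H_n n v - 1).

(* Main.v *)
Require Import Defs.
From Stdlib Require Import Reals Lra Lia.
From Coquelicot Require Import Coquelicot.
Open Scope R_scope.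
Lemma cont_of_ex_derive (f : R -> R) x : ex_derive f x -> continuous f x.
Proof. intros H. apply (@ex_derive_continuous R_AbsRing R_NormedModule). exact H. Qed.
Lemma exRc (f : R -> R) a b : (forall z, Rmin a b <= z <= Rmax a b -> continuous f z) -> ex_RInt f a b.
Proof. intros H. apply (@ex_RInt_continuous R_CompleteNormedModule). exact H. Qed.
Lemma RInt_correctR (f : R -> R) a b : ex_RInt f a b -> is_RInt f a b (RInt f a b).
Proof. intros H. apply (@RInt_correct R_CompleteNormedModule). exact H. Qed.

Definition gf (t : R) : R := exp (- (t * t)).
Definition GG (x : R) : R := RInt gf 0 x.

Lemma gf_cont x : continuous gf x.
Proof. apply cont_of_ex_derive. unfold gf. auto_derive. easy. Qed.

Lemma ex_RInt_gf a b : ex_RInt gf a b.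
Proof. apply exRc. intros; apply gf_cont. Qed.

Lemma GG_deriv x : is_derive GG x (gf x).
Proof.
  apply (@is_derive_RInt R_CompleteNormedModule) with 0.
  - apply filter_forall. intros y. apply RInt_correctR, ex_RInt_gf.
  - apply gf_cont.
Qed.

Definition jf (x t : R) : R := exp (- (x * x) * (1 + t * t)) / (1 + t * t).
Definition JJ (x : R) : R := RInt (fun t => jf x t) 0 1.

Lemma onept_pos t : 0 < 1 + t * t.
Proof. nra. Qed.

Lemma jf_derive u t : is_derive (fun z => jf z t) u (- 2 * u * exp (- (u * u) * (1 + t * t))).
Proof.
  unfold jf. auto_derive.
  - generalize (onept_pos t); lra.
  - field. generalize (onept_pos t); lra.
Qed.

Lemma jf_cont x t : continuous (jf x) t.
Proof. apply cont_of_ex_derive. unfold jf. auto_derive. generalize (onept_pos t); lra. Qed.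

Lemma ex_RInt_jf x a b : ex_RInt (jf x) a b.
Proof. apply exRc. intros; apply jf_cont. Qed.

Lemma exp_cont_pt y : continuity_pt exp y.
Proof. apply derivable_continuous_pt, derivable_pt_exp. Qed.

Lemma JJ_deriv x : is_derive JJ x (RInt (fun t => - 2 * x * exp (- (x * x) * (1 + t * t))) 0 1).
Proof.
  unfold JJ.
  replace (RInt (fun t => - 2 * x * exp (- (x * x) * (1 + t * t))) 0 1)
    with (RInt (fun t => Derive (fun u => jf u t) x) 0 1).
  2:{ apply RInt_ext. intros t _. apply is_derive_unique, jf_derive. }
  apply (is_derive_RInt_param jf 0 1 x).
  - apply filter_forall. intros y t _. eexists. apply jf_derive.
  - intros t _.
    apply continuity_2d_pt_ext with (fun u v => - 2 * u * exp (- (u * u) * (1 + v * v))).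
    { intros u v. symmetry. apply is_derive_unique, jf_derive. }
    apply continuity_2d_pt_mult.
    + apply continuity_2d_pt_mult. apply continuity_2d_pt_const. apply continuity_2d_pt_id1.
    + apply continuity_1d_2d_pt_comp with (f := exp). apply exp_cont_pt.
      apply continuity_2d_pt_mult.
      * apply continuity_2d_pt_opp. apply continuity_2d_pt_mult; apply continuity_2d_pt_id1.
      * apply continuity_2d_pt_plus. apply continuity_2d_pt_const.
        apply continuity_2d_pt_mult; apply continuity_2d_pt_id2.
  - apply filter_forall. intros y. apply ex_RInt_jf.
Qed.
Lemma RInt_extR (f g : R -> R) a b : (forall x, Rmin a b < x < Rmax a b -> f x = g x) -> RInt f a b = RInt g a b.
Proof. intros H. apply (@RInt_ext R_CompleteNormedModule). exact H. Qed.
Lemma is_RInt_extR (f g : R -> R) a b l : (forall x, Rmin a b < x < Rmax a b -> f x = g x) -> is_RInt f a b l -> is_RInt g a b l.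
Proof. intros H. apply (@is_RInt_ext R_CompleteNormedModule). exact H. Qed.
Lemma scalR (a b : R) : scal a b = a * b.
Proof. reflexivity. Qed.

Lemma RInt_scalR (f : R -> R) a b l : ex_RInt f a b -> RInt (fun x => l * f x) a b = l * RInt f a b.
Proof. intros H. apply (@RInt_scal R_CompleteNormedModule). exact H. Qed.

Lemma JJ_deriv' x : is_derive JJ x (- 2 * exp (- (x * x)) * GG x).
Proof.
  replace (- 2 * exp (- (x * x)) * GG x) with (RInt (fun t => - 2 * x * exp (- (x * x) * (1 + t * t))) 0 1).
  apply JJ_deriv.
  transitivity (RInt (fun t => (- 2 * exp (- (x * x))) * (x * gf (x * t + 0))) 0 1).
  { apply RInt_extR. intros t _. unfold gf. replace (- (x * x) * (1 + t * t)) with (- (x * x) + - ((x * t + 0) * (x * t + 0))) by ring.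
    rewrite exp_plus. ring. }
  rewrite RInt_scalR.
  2:{ apply exRc. intros z _. apply cont_of_ex_derive. unfold gf; auto_derive; easy. }
  f_equal. unfold GG.
  assert (E := @RInt_comp_lin R_CompleteNormedModule gf x 0 0 1 (ex_RInt_gf _ _)).
  rewrite Rmult_0_r, Rplus_0_r, Rmult_1_r, Rplus_0_r in E.
  rewrite <- E. apply RInt_extR. intros. rewrite Rplus_0_r. reflexivity.
Qed.

Definition hh (x : R) : R := JJ x + GG x * GG x.

Lemma hh_deriv x : is_derive hh x 0.
Proof.
  unfold hh.
  replace 0 with (- 2 * exp (- (x * x)) * GG x + (gf x * GG x + GG x * gf x)).
  2:{ unfold gf; ring. }
  apply (@is_derive_plus R_AbsRing R_NormedModule).
  apply JJ_deriv'.
  apply (@is_derive_mult R_AbsRing). apply GG_deriv. apply GG_deriv.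
  intros; apply Rmult_comm.
Qed.

Lemma hh_const x : hh x = hh 0.
Proof.
  assert (H := @is_RInt_derive R_CompleteNormedModule hh (fun _ => 0) 0 x (fun y _ => hh_deriv y)
    (fun y _ => continuous_const _ y)).
  apply is_RInt_unique in H. rewrite RInt_const in H.
  rewrite scalR in H. simpl in H. unfold minus, plus, opp in H; simpl in H. lra.
Qed.

Lemma GG0 : GG 0 = 0.
Proof. unfold GG. apply (@RInt_point R_CompleteNormedModule). Qed.

Lemma JJ0 : JJ 0 = PI / 4.
Proof.
  unfold JJ. rewrite <- atan_1.
  replace (atan 1) with (atan 1 - atan 0) by (rewrite atan_0; ring).
  apply is_RInt_unique.
  replace (atan 1 - atan 0) with (minus (atan 1) (atan 0)) by reflexivity.
  apply (is_RInt_extR (fun t => / (1 + t ^ 2))).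
  { intros t _. unfold jf. replace (- (0 * 0) * (1 + t * t)) with 0 by ring. rewrite exp_0. idtac. field. generalize (onept_pos t); lra. }
  apply (@is_RInt_derive R_CompleteNormedModule).
  - intros y _. apply is_derive_Reals. apply derivable_pt_lim_atan.
  - intros y _. apply cont_of_ex_derive. auto_derive. generalize (onept_pos y); simpl; nra.
Qed.

Lemma hh0 : hh 0 = PI / 4.
Proof. unfold hh. rewrite JJ0, GG0. ring. Qed.
Lemma exp_leR x y : x <= y -> exp x <= exp y.
Proof. intros [H|H]. left; apply exp_increasing; exact H. subst; lra. Qed.

Lemma JJ_ge0 x : 0 <= JJ x.
Proof.
  unfold JJ. apply RInt_ge_0. lra. apply ex_RInt_jf.
  intros t _. unfold jf. apply Rlt_le, Rdiv_lt_0_compat. apply exp_pos. apply onept_pos.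
Qed.

Lemma JJ_le x : JJ x <= exp (- (x * x)).
Proof.
  unfold JJ.
  apply Rle_trans with (RInt (fun _ => exp (- (x * x))) 0 1).
  - apply RInt_le. lra. apply ex_RInt_jf. apply exRc. intros; apply continuous_const.
    intros t _. unfold jf. generalize (onept_pos t); intros Hp.
    apply Rle_trans with (exp (- (x * x) * (1 + t * t))).
    + unfold Rdiv. rewrite <- (Rmult_1_r (exp _)) at 2. apply Rmult_le_compat_l. left; apply exp_pos.
      rewrite <- Rinv_1. apply Rinv_le_contravar. lra. nra.
    + apply exp_leR. nra.
  - rewrite RInt_const, scalR. lra.
Qed.

Lemma GG_ge0 x : 0 <= x -> 0 <= GG x.
Proof. intros Hx. unfold GG. apply RInt_ge_0. exact Hx. apply ex_RInt_gf. intros; left; apply exp_pos. Qed.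

Lemma GG_odd x : GG (- x) = - GG x.
Proof.
  unfold GG.
  assert (E := @RInt_comp_lin R_CompleteNormedModule gf (-1) 0 0 x (ex_RInt_gf _ _)).
  replace (-1 * 0 + 0) with 0 in E by (simpl; ring).
  replace (-1 * x + 0) with (- x) in E by (simpl; ring).
  rewrite <- E. rewrite (RInt_extR _ (fun y => -1 * gf y)).
  - rewrite RInt_scalR. ring. apply ex_RInt_gf.
  - intros y _. rewrite scalR. unfold gf. f_equal. f_equal. f_equal. ring.
Qed.

Lemma sqrtPI_pos : 0 < sqrt PI.
Proof. apply sqrt_lt_R0, PI_RGT_0. Qed.

Lemma GG_sq x : GG x * GG x = PI / 4 - JJ x.
Proof. generalize (hh_const x); rewrite hh0; unfold hh; lra. Qed.

Lemma GG_close x : 0 <= x -> Rabs (GG x - sqrt PI / 2) <= 2 / sqrt PI * exp (- (x * x)).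
Proof.
  intros Hx. generalize (GG_ge0 x Hx) (GG_sq x) (JJ_ge0 x) (JJ_le x) sqrtPI_pos; intros H1 H2 H3 H4 H5.
  assert (HP : sqrt PI * sqrt PI = PI) by (apply sqrt_sqrt; left; apply PI_RGT_0).
  assert (E : (GG x - sqrt PI / 2) * (GG x + sqrt PI / 2) = - JJ x) by nra.
  assert (Hq : 0 < GG x + sqrt PI / 2) by lra.
  replace (GG x - sqrt PI / 2) with (- JJ x / (GG x + sqrt PI / 2)) by (field_simplify_eq; [nra|lra]).
  rewrite Rabs_div by lra. rewrite Rabs_Ropp, (Rabs_pos_eq (JJ x)) by lra.
  rewrite Rabs_pos_eq by lra.
  apply Rle_trans with (JJ x / (sqrt PI / 2)).
  - apply Rmult_le_compat_l. lra. apply Rinv_le_contravar; lra.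
  - replace (2 / sqrt PI * exp (- (x * x))) with (exp (- (x * x)) / (sqrt PI / 2)) by (field; lra).
    apply Rmult_le_compat_r. left; apply Rinv_0_lt_compat; lra. exact H4.
Qed.

Lemma exp_neg_sq_le x : exp (- (x * x)) <= / (1 + x * x).
Proof.
  generalize (exp_ineq1_le (x * x)) (onept_pos x); intros H1 H2.
  rewrite exp_Ropp. apply Rinv_le_contravar; lra.
Qed.

Lemma GG_lim_p eps : 0 < eps -> exists T, forall x, T <= x -> Rabs (GG x - sqrt PI / 2) < eps.
Proof.
  intros He. generalize sqrtPI_pos; intros Hs.
  exists (2 / sqrt PI / eps + 1). intros x Hx.
  assert (H0 : 0 < 2 / sqrt PI / eps) by (apply Rdiv_lt_0_compat; [apply Rdiv_lt_0_compat|]; lra).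
  eapply Rle_lt_trans. apply GG_close. lra.
  apply Rle_lt_trans with (2 / sqrt PI * / (1 + x * x)).
  - apply Rmult_le_compat_l. left; apply Rdiv_lt_0_compat; lra. apply exp_neg_sq_le.
  - assert (2 / sqrt PI < eps * (1 + x * x)).
    { assert (2 / sqrt PI = eps * (2 / sqrt PI / eps)) by (field; lra).
      assert (x * x >= x) by nra. rewrite H. apply Rmult_lt_compat_l; lra. }
    apply (Rmult_lt_reg_r (1 + x * x)). apply onept_pos.
    rewrite Rmult_assoc, Rinv_l. lra. generalize (onept_pos x); lra.
Qed.

Lemma GG_lim_m eps : 0 < eps -> exists T, forall x, x <= T -> Rabs (GG x + sqrt PI / 2) < eps.
Proof.
  intros He. destruct (GG_lim_p eps He) as [T HT]. exists (- T). intros x Hx.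
  replace x with (- (- x)) by ring. rewrite GG_odd.
  replace (- GG (- x) + sqrt PI / 2) with (- (GG (- x) - sqrt PI / 2)) by ring.
  rewrite Rabs_Ropp. apply HT. lra.
Qed.
Lemma ex_RInt_plusR (f g : R -> R) a b : ex_RInt f a b -> ex_RInt g a b -> ex_RInt (fun y => f y + g y) a b.
Proof. intros H1 H2. apply (@ex_RInt_plus R_NormedModule); auto. Qed.
Lemma RInt_plusR (f g : R -> R) a b : ex_RInt f a b -> ex_RInt g a b -> RInt (fun y => f y + g y) a b = RInt f a b + RInt g a b.
Proof. intros H1 H2. apply (@RInt_plus R_CompleteNormedModule); auto. Qed.
Lemma ex_RInt_scalR (f : R -> R) a b k : ex_RInt f a b -> ex_RInt (fun y => k * f y) a b.
Proof. intros H1. apply (@ex_RInt_scal R_NormedModule); auto. Qed.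
Lemma RInt_ChaslesR (f : R -> R) a b c : ex_RInt f a b -> ex_RInt f b c -> RInt f a b + RInt f b c = RInt f a c.
Proof. intros H1 H2. apply (@RInt_Chasles R_CompleteNormedModule); auto. Qed.
Lemma ex_RInt_extR (f g : R -> R) a b : (forall x, Rmin a b < x < Rmax a b -> f x = g x) -> ex_RInt f a b -> ex_RInt g a b.
Proof. intros H. apply (@ex_RInt_ext R_NormedModule). exact H. Qed.

Definition ImpInt' (f : R -> R) (l : R) : Prop :=
  forall eps, 0 < eps -> exists M, forall a b, a <= - M -> M <= b ->
    ex_RInt f a b /\ Rabs (RInt f a b - l) < eps.

Lemma ImpInt_of f l : ImpInt' f l -> ImpInt f l.
Proof.
  intros H eps He. destruct (H eps He) as [M HM]. exists M. intros a b Ha Hb.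
  destruct (HM a b Ha Hb) as [H1 H2].
  exists (ex_RInt_Reals_0 _ _ _ H1). rewrite <- RInt_Reals. exact H2.
Qed.

Lemma ImpInt_to f l : ImpInt f l -> ImpInt' f l.
Proof.
  intros H eps He. destruct (H eps He) as [M HM]. exists M. intros a b Ha Hb.
  destruct (HM a b Ha Hb) as [pr H2]. split.
  apply ex_RInt_Reals_1; exact pr. rewrite (RInt_Reals _ _ _ pr). exact H2.
Qed.

Lemma ImpInt_ext f g l : (forall x, f x = g x) -> ImpInt f l -> ImpInt g l.
Proof.
  intros E H. apply ImpInt_of. apply ImpInt_to in H. intros eps He.
  destruct (H eps He) as [M HM]. exists M. intros a b Ha Hb. destruct (HM a b Ha Hb) as [H1 H2].
  split. apply ex_RInt_extR with f; auto.
  rewrite <- (RInt_extR f g); auto.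
Qed.

Lemma ImpInt_plus f g l1 l2 : ImpInt f l1 -> ImpInt g l2 -> ImpInt (fun x => f x + g x) (l1 + l2).
Proof.
  intros H1 H2. apply ImpInt_to in H1. apply ImpInt_to in H2. apply ImpInt_of.
  intros eps He. destruct (H1 (eps/2)) as [M1 HM1]. lra. destruct (H2 (eps/2)) as [M2 HM2]. lra.
  exists (Rmax M1 M2). intros a b Ha Hb.
  destruct (HM1 a b) as [A1 B1]. generalize (Rmax_l M1 M2); lra. generalize (Rmax_l M1 M2); lra.
  destruct (HM2 a b) as [A2 B2]. generalize (Rmax_r M1 M2); lra. generalize (Rmax_r M1 M2); lra.
  split. apply ex_RInt_plusR; auto.
  rewrite RInt_plusR by auto.
  replace (RInt f a b + RInt g a b - (l1 + l2)) with ((RInt f a b - l1) + (RInt g a b - l2)) by ring.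
  eapply Rle_lt_trans. apply Rabs_triang. lra.
Qed.

Lemma ImpInt_scal f l k : ImpInt f l -> ImpInt (fun x => k * f x) (k * l).
Proof.
  intros H1. apply ImpInt_to in H1. apply ImpInt_of.
  intros eps He. destruct (H1 (eps / (Rabs k + 1))) as [M HM].
  apply Rdiv_lt_0_compat; [lra| generalize (Rabs_pos k); lra].
  exists M. intros a b Ha Hb. destruct (HM a b Ha Hb) as [A B]. split.
  apply ex_RInt_scalR; auto.
  rewrite RInt_scalR by auto.
  replace (k * RInt f a b - k * l) with (k * (RInt f a b - l)) by ring.
  rewrite Rabs_mult. generalize (Rabs_pos k) (Rabs_pos (RInt f a b - l)); intros P1 P2.
  apply Rle_lt_trans with (Rabs k * (eps / (Rabs k + 1))).
  apply Rmult_le_compat_l; lra.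
  replace (Rabs k * (eps / (Rabs k + 1))) with (eps * (Rabs k / (Rabs k + 1))) by (field; lra).
  assert (Rabs k / (Rabs k + 1) < 1). { apply (Rmult_lt_reg_r (Rabs k + 1)). lra. field_simplify; lra. }
  nra.
Qed.

Lemma ImpInt_zero : ImpInt (fun _ => 0) 0.
Proof.
  apply ImpInt_of. intros eps He. exists 0. intros a b _ _. split.
  apply exRc; intros; apply continuous_const.
  rewrite RInt_const, scalR. rewrite Rmult_0_r, Rminus_0_r, Rabs_R0. exact He.
Qed.
Lemma locally_pos x : 0 < x -> locally x (fun y => 0 < y).
Proof.
  intros Hx. exists (mkposreal x Hx). intros y Hy.
  assert (H : Rabs (y - x) < x) by exact Hy.
  apply Rabs_def2 in H. simpl in H. lra.
Qed.

Lemma locally_neg x : x < 0 -> locally x (fun y => y < 0).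
Proof.
  intros Hx. assert (Hx' : 0 < - x) by lra. exists (mkposreal (- x) Hx'). intros y Hy.
  assert (H : Rabs (y - x) < - x) by exact Hy.
  apply Rabs_def2 in H. simpl in H. lra.
Qed.

Lemma sqrt2_sq : sqrt 2 * sqrt 2 = 2.
Proof. apply sqrt_sqrt. lra. Qed.
Lemma sqrt2_pos : 0 < sqrt 2.
Proof. apply sqrt_lt_R0. lra. Qed.

Section Moment.
Variables (mu s : R) (Hs : 0 < s) (p q : nat).

Definition rr := INR p - INR q.
Definition cc := mu + rr * (s * s).
Definition ff (x : R) : R := x ^ p * (/ x) ^ q * lnpdf mu s x.
Definition tt (x : R) : R := (ln x - cc) / (sqrt 2 * s).
Definition KK : R := exp (rr * mu + rr * rr * (s * s) / 2) / sqrt PI.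
Definition FF (x : R) : R := KK * GG (tt x).
Definition ffs (x : R) : R := KK * gf (tt x) * / (sqrt 2 * s * x).

Lemma KK_pos : 0 < KK.
Proof. unfold KK. apply Rdiv_lt_0_compat. apply exp_pos. apply sqrtPI_pos. Qed.

Lemma tt_sq x : tt x * tt x = (ln x - cc) ^ 2 / (2 * s ^ 2).
Proof.
  generalize sqrt2_pos sqrt2_sq; intros H1 H2.
  unfold tt. replace (2 * s ^ 2) with ((sqrt 2 * s) * (sqrt 2 * s)) by (transitivity ((sqrt 2 * sqrt 2) * (s * s)); [ring | rewrite H2; ring]).
  field. split; lra.
Qed.

Lemma ff_neg x : x <= 0 -> ff x = 0.
Proof. intros Hx. unfold ff, lnpdf. destruct (Rlt_dec 0 x). lra. ring. Qed.

Lemma ff_pos x : 0 < x -> ff x = ffs x.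
Proof.
  intros Hx. unfold ff, ffs, lnpdf. destruct (Rlt_dec 0 x) as [_|n]; [|lra].
  rewrite <- (Rpower_pow p x Hx), <- (Rpower_pow q (/ x)) by (apply Rinv_0_lt_compat; exact Hx).
  unfold Rpower. rewrite ln_Rinv by exact Hx.
  rewrite sqrt_mult by (try lra; left; apply PI_RGT_0).
  generalize sqrt2_pos sqrtPI_pos; intros H1 H2.
  set (L := ln x).
  assert (key : exp (INR p * L) * exp (INR q * - L) * exp (- (L - mu) ^ 2 / (2 * s ^ 2))
     = exp (rr * mu + rr * rr * (s * s) / 2) * gf (tt x)).
  { unfold gf. rewrite tt_sq. rewrite <- !exp_plus. f_equal. fold L. unfold cc, rr. field. lra. }
  transitivity (exp (INR p * L) * exp (INR q * - L) * exp (- (L - mu) ^ 2 / (2 * s ^ 2)) / (x * s * (sqrt 2 * sqrt PI))).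
  { field. repeat split; lra. }
  rewrite key. unfold KK. field. repeat split; lra.
Qed.

Lemma tt_deriv x : 0 < x -> is_derive tt x (/ x / (sqrt 2 * s)).
Proof.
  intros Hx. generalize sqrt2_pos; intros H1. unfold tt.
  auto_derive. exact Hx. field. repeat split; lra.
Qed.

Lemma FF_deriv x : 0 < x -> is_derive FF x (ffs x).
Proof.
  intros Hx. generalize sqrt2_pos; intros H1.
  replace (ffs x) with (KK * ((/ x / (sqrt 2 * s)) * gf (tt x))).
  2:{ unfold ffs. field. repeat split; lra. }
  unfold FF. apply is_derive_scal.
  apply (@is_derive_comp R_AbsRing R_NormedModule GG tt x). apply GG_deriv. apply tt_deriv; exact Hx.
Qed.

Lemma ffs_cont x : 0 < x -> continuous ffs x.
Proof.
  intros Hx. generalize sqrt2_pos; intros H1. apply cont_of_ex_derive. unfold ffs, tt, gf.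
  auto_derive. repeat split; try lra. apply Rmult_integral_contrapositive; split; try lra.
  apply Rmult_integral_contrapositive; split; lra.
Qed.

Lemma ff_small e : 0 < e -> exists d, 0 < d /\ forall x, 0 < x < d -> Rabs (ff x) < e.
Proof.
  intros He. generalize sqrt2_pos sqrt2_sq KK_pos; intros H1 H2 HK.
  set (C2 := KK / (sqrt 2 * s) * exp (s * s - cc)).
  assert (HC2 : 0 < C2). { unfold C2. apply Rmult_lt_0_compat. apply Rdiv_lt_0_compat; nra. apply exp_pos. }
  set (Y := C2 / e + 1).
  assert (HY : 1 < Y). { unfold Y. assert (0 < C2 / e) by (apply Rdiv_lt_0_compat; lra). lra. }
  exists (exp (cc - 2 * s * Y)). split. apply exp_pos.
  intros x [Hx0 Hxd].
  rewrite ff_pos by exact Hx0. unfold ffs, gf.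
  set (L := ln x). set (w := (L - cc) / (2 * s)).
  assert (HL : L < cc - 2 * s * Y).
  { unfold L. rewrite <- (ln_exp (cc - 2 * s * Y)). apply ln_increasing; auto. }
  assert (Hw : w <= - Y). { unfold w. apply (Rmult_le_reg_r (2 * s)). lra. unfold Rdiv. rewrite Rmult_assoc, Rinv_l by lra. nra. }
  assert (Hw2 : Y < 1 + w * w) by nra.
  assert (Eq : KK * exp (- (tt x * tt x)) * / (sqrt 2 * s * x) = KK / (sqrt 2 * s) * exp (- (tt x * tt x) - L)).
  { unfold Rminus. rewrite exp_plus. rewrite (exp_Ropp L). unfold L. rewrite exp_ln by exact Hx0. field. repeat split; lra. }
  rewrite Eq. rewrite Rabs_pos_eq.
  2:{ apply Rmult_le_pos. left; apply Rdiv_lt_0_compat; nra. left; apply exp_pos. }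
  assert (Bd : - (tt x * tt x) - L <= (s * s - cc) + - (w * w)).
  { rewrite tt_sq. fold L. unfold w.
    assert (0 <= ((L - cc) / (2 * s) + s) ^ 2) by apply pow2_ge_0.
    assert (E2 : ((L - cc) / (2 * s) + s) ^ 2 = (L - cc) ^ 2 / (4 * s ^ 2) + (L - cc) + s * s) by (field; lra).
    assert (E3 : - ((L - cc) ^ 2 / (2 * s ^ 2)) - L - (s * s - cc + - ((L - cc) / (2 * s) * ((L - cc) / (2 * s))))
       = - (((L - cc) / (2 * s) + s) ^ 2)) by (field; lra).
    lra. }
  apply Rle_lt_trans with (KK / (sqrt 2 * s) * (exp (s * s - cc) * / (1 + w * w))).
  { apply Rmult_le_compat_l. left; apply Rdiv_lt_0_compat; nra.
    eapply Rle_trans. apply exp_leR, Bd. rewrite exp_plus. apply Rmult_le_compat_l. left; apply exp_pos.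
    apply exp_neg_sq_le. }
  rewrite <- Rmult_assoc. fold C2.
  apply (Rmult_lt_reg_r (1 + w * w)). lra.
  rewrite Rmult_assoc, Rinv_l by lra. rewrite Rmult_1_r.
  assert (C2 = e * (Y - 1)) by (unfold Y; field; lra). nra.
Qed.

Lemma ff_cont x : continuous ff x.
Proof.
  destruct (Rlt_or_le 0 x) as [Hx|Hx].
  - apply continuous_ext_loc with ffs.
    + apply (filter_imp (fun y => 0 < y)). intros y Hy. symmetry. apply ff_pos; exact Hy. apply locally_pos; exact Hx.
    + apply ffs_cont; exact Hx.
  - destruct Hx as [Hx|Hx].
    + apply continuous_ext_loc with (fun _ => 0).
      * apply (filter_imp (fun y => y < 0)). intros y Hy. symmetry. apply ff_neg; lra. apply locally_neg; exact Hx.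
      * apply continuous_const.
    + subst x. apply continuity_pt_filterlim.
      intros e He. destruct (ff_small e He) as [d [Hd Hdd]].
      exists d. split. exact Hd. intros y [_ Hy].
      simpl in *. unfold R_dist in *.
      rewrite (ff_neg 0) by lra. rewrite Rminus_0_r in *.
      destruct (Rlt_or_le 0 y) as [Hy0|Hy0].
      * apply Hdd. apply Rabs_def2 in Hy. lra.
      * rewrite ff_neg by exact Hy0. rewrite Rabs_R0. exact He.
Qed.

Lemma ex_RInt_ff a b : ex_RInt ff a b.
Proof. apply exRc. intros; apply ff_cont. Qed.
Lemma zero_of_small (D : R) : (forall e, 0 < e -> Rabs D < e) -> D = 0.
Proof.
  intros H. destruct (Req_dec D 0) as [E|E]. exact E.
  exfalso. assert (0 < Rabs D) by (apply Rabs_pos_lt; exact E).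
  specialize (H (Rabs D) H0). lra.
Qed.

Lemma RInt_ff_eb e b : 0 < e -> e <= b -> RInt ff e b = FF b - FF e.
Proof.
  intros He Heb. apply is_RInt_unique.
  apply (@is_RInt_derive R_CompleteNormedModule FF ff).
  - intros x Hx. rewrite Rmin_left, Rmax_right in Hx by lra.
    rewrite ff_pos by lra. apply FF_deriv. lra.
  - intros x _. apply ff_cont.
Qed.

Lemma RInt_ff_0b b : 0 < b -> RInt ff 0 b = FF b + KK * sqrt PI / 2.
Proof.
  intros Hb. apply Rminus_diag_uniq. apply zero_of_small. intros e He.
  generalize KK_pos sqrtPI_pos sqrt2_pos; intros HK HP H2.
  destruct (ff_small 1 ltac:(lra)) as [d1 [Hd1 Hd1b]].
  destruct (GG_lim_m (e / 2 / KK)) as [T HT]. apply Rdiv_lt_0_compat; lra.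
  set (eps := Rmin (Rmin (b / 2) (d1 / 2)) (Rmin (e / 2) (exp (sqrt 2 * s * T + cc)))).
  assert (He1 : 0 < eps).
  { unfold eps. repeat apply Rmin_pos; try lra. apply exp_pos. }
  assert (He2 : eps <= b / 2) by (unfold eps; eapply Rle_trans; [apply Rmin_l|apply Rmin_l]).
  assert (He3 : eps <= d1 / 2) by (unfold eps; eapply Rle_trans; [apply Rmin_l|apply Rmin_r]).
  assert (He4 : eps <= e / 2) by (unfold eps; eapply Rle_trans; [apply Rmin_r|apply Rmin_l]).
  assert (He5 : eps <= exp (sqrt 2 * s * T + cc)) by (unfold eps; eapply Rle_trans; [apply Rmin_r|apply Rmin_r]).
  rewrite <- (RInt_ChaslesR ff 0 eps b) by apply ex_RInt_ff.
  rewrite (RInt_ff_eb eps b) by lra.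
  replace (RInt ff 0 eps + (FF b - FF eps) - (FF b + KK * sqrt PI / 2))
    with (RInt ff 0 eps + - (FF eps + KK * sqrt PI / 2)) by field.
  eapply Rle_lt_trans. apply Rabs_triang. rewrite Rabs_Ropp.
  assert (A1 : Rabs (RInt ff 0 eps) <= (eps - 0) * 1).
  { apply abs_RInt_le_const. lra. apply ex_RInt_ff.
    intros t [Ht1 Ht2]. destruct Ht1 as [Ht1|Ht1].
    - left. apply Hd1b. lra.
    - subst t. rewrite ff_neg by lra. rewrite Rabs_R0. lra. }
  assert (A2 : Rabs (FF eps + KK * sqrt PI / 2) < e / 2).
  { unfold FF. replace (KK * GG (tt eps) + KK * sqrt PI / 2) with (KK * (GG (tt eps) + sqrt PI / 2)) by field.
    rewrite Rabs_mult, Rabs_pos_eq by lra.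
    assert (Hl : tt eps <= T).
    { unfold tt. apply (Rmult_le_reg_r (sqrt 2 * s)). nra. unfold Rdiv. rewrite Rmult_assoc, Rinv_l by nra.
      rewrite Rmult_1_r. assert (ln eps <= sqrt 2 * s * T + cc).
      { rewrite <- (ln_exp (sqrt 2 * s * T + cc)). destruct He5 as [He5|He5].
        left; apply ln_increasing; auto. rewrite He5; lra. }
      lra. }
    specialize (HT _ Hl).
    apply (Rmult_lt_compat_l KK) in HT; [|exact HK].
    replace (KK * (e / 2 / KK)) with (e / 2) in HT by (field; lra). exact HT. }
  lra.
Qed.

Lemma RInt_ff_a0 a : a <= 0 -> RInt ff a 0 = 0.
Proof.
  intros Ha. rewrite (RInt_extR ff (fun _ => 0)).
  - rewrite RInt_const, scalR. apply Rmult_0_r.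
  - intros x Hx. rewrite Rmin_left, Rmax_right in Hx by lra. apply ff_neg. lra.
Qed.

Lemma KK_sqrtPI : KK * sqrt PI = exp (rr * mu + rr * rr * (s * s) / 2).
Proof. unfold KK. field. generalize sqrtPI_pos; lra. Qed.

Lemma moment : ImpInt ff (exp (rr * mu + rr * rr * (s * s) / 2)).
Proof.
  apply ImpInt_of. intros e He.
  generalize KK_pos sqrtPI_pos sqrt2_pos; intros HK HP H2.
  destruct (GG_lim_p (e / KK)) as [T HT]. apply Rdiv_lt_0_compat; lra.
  exists (Rmax 1 (exp (sqrt 2 * s * T + cc))). intros a b Ha Hb.
  generalize (Rmax_l 1 (exp (sqrt 2 * s * T + cc))) (Rmax_r 1 (exp (sqrt 2 * s * T + cc))); intros M1 M2.
  split. apply ex_RInt_ff.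
  rewrite <- (RInt_ChaslesR ff a 0 b) by apply ex_RInt_ff.
  rewrite RInt_ff_a0 by lra. rewrite RInt_ff_0b by lra.
  rewrite <- KK_sqrtPI. unfold FF.
  replace (0 + (KK * GG (tt b) + KK * sqrt PI / 2) - KK * sqrt PI) with (KK * (GG (tt b) - sqrt PI / 2)) by field.
  rewrite Rabs_mult, Rabs_pos_eq by lra.
  assert (Hl : T <= tt b).
  { unfold tt. apply (Rmult_le_reg_r (sqrt 2 * s)). nra. unfold Rdiv. rewrite Rmult_assoc, Rinv_l by nra.
    rewrite Rmult_1_r. assert (sqrt 2 * s * T + cc <= ln b).
    { rewrite <- (ln_exp (sqrt 2 * s * T + cc)). assert (E: exp (sqrt 2 * s * T + cc) <= b) by lra.
      destruct E as [E|E]. left; apply ln_increasing; auto. apply exp_pos. rewrite E; lra. }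
    lra. }
  specialize (HT _ Hl).
  apply (Rmult_lt_compat_l KK) in HT; [|exact HK].
  replace (KK * (e / KK)) with e in HT by (field; lra). exact HT.
Qed.

End Moment.
Lemma IterInt_ext n : forall f g l, (forall v, f v = g v) -> IterInt n f l -> IterInt n g l.
Proof.
  induction n as [|n IH]; intros f g l E H; simpl in *.
  - rewrite H. apply E.
  - destruct H as [h [Hh Hin]]. exists h. split. exact Hh.
    intros x. apply IH with (fun v => f (upd v n x)). intros v; apply E. apply Hin.
Qed.

Lemma IterInt_plus n : forall f g l1 l2, IterInt n f l1 -> IterInt n g l2 ->
  IterInt n (fun v => f v + g v) (l1 + l2).
Proof.
  induction n as [|n IH]; intros f g l1 l2 H1 H2; simpl in *.
  - rewrite H1, H2. reflexivity.
  - destruct H1 as [h1 [Hh1 Hin1]]. destruct H2 as [h2 [Hh2 Hin2]].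
    exists (fun x => h1 x + h2 x). split. apply ImpInt_plus; auto.
    intros x. apply (IH (fun v => f (upd v n x)) (fun v => g (upd v n x))); auto.
Qed.

Lemma IterInt_scal n : forall f l k, IterInt n f l -> IterInt n (fun v => k * f v) (k * l).
Proof.
  induction n as [|n IH]; intros f l k H1; simpl in *.
  - rewrite H1. reflexivity.
  - destruct H1 as [h1 [Hh1 Hin1]].
    exists (fun x => k * h1 x). split. apply ImpInt_scal; auto.
    intros x. apply (IH (fun v => f (upd v n x))); auto.
Qed.

Lemma IterInt_sum n (F : nat -> (nat -> R) -> R) (L : nat -> R) N :
  (forall i, (i <= N)%nat -> IterInt n (F i) (L i)) ->
  IterInt n (fun v => sum_f_R0 (fun i => F i v) N) (sum_f_R0 L N).
Proof.
  induction N as [|N IH]; intros H; simpl.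
  - apply H. lia.
  - apply (IterInt_plus n (fun v => sum_f_R0 (fun i => F i v) N) (F (S N))).
    apply IH. intros; apply H; lia. apply H; lia.
Qed.

Lemma ImpInt_sum (F : nat -> R -> R) (L : nat -> R) N :
  (forall i, (i <= N)%nat -> ImpInt (F i) (L i)) ->
  ImpInt (fun x => sum_f_R0 (fun i => F i x) N) (sum_f_R0 L N).
Proof.
  induction N as [|N IH]; intros H; simpl.
  - apply H. lia.
  - apply (ImpInt_plus (fun x => sum_f_R0 (fun i => F i x) N) (F (S N))).
    apply IH. intros; apply H; lia. apply H; lia.
Qed.

Lemma sumR_upd_lt v n x (f : R -> R) m : (m <= n)%nat ->
  sumR m (fun i => f (upd v n x i)) = sumR m (fun i => f (v i)).
Proof.
  induction m as [|m IH]; intros Hm; simpl. reflexivity.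
  rewrite IH by lia. f_equal. unfold upd. destruct (Nat.eq_dec m n). lia. reflexivity.
Qed.

Lemma prodR_upd_lt v n x (f : R -> R) m : (m <= n)%nat ->
  prodR m (fun i => f (upd v n x i)) = prodR m (fun i => f (v i)).
Proof.
  induction m as [|m IH]; intros Hm; simpl. reflexivity.
  rewrite IH by lia. f_equal. unfold upd. destruct (Nat.eq_dec m n). lia. reflexivity.
Qed.

Lemma upd_eq v n x : upd v n x n = x.
Proof. unfold upd. destruct (Nat.eq_dec n n). reflexivity. lia. Qed.

Lemma sum_prod (A B : nat -> R) N M K :
  sum_f_R0 A N * sum_f_R0 B M * K = sum_f_R0 (fun i => sum_f_R0 (fun j => A i * B j * K) M) N.
Proof.
  assert (HB : forall a, sum_f_R0 (fun j => a * B j * K) M = a * sum_f_R0 B M * K).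
  { intros a. induction M as [|M IH]; simpl. ring. rewrite IH. ring. }
  induction N as [|N IH]; simpl. rewrite HB. ring. rewrite HB, <- IH. ring.
Qed.

Definition mm (mu s : R) (p q : nat) : R := exp (rr p q * mu + rr p q * rr p q * (s * s) / 2).

Fixpoint Mom (mu s : R) (n a b : nat) : R :=
  match n with
  | O => 0 ^ a * 0 ^ b
  | S n' => sum_f_R0 (fun i => sum_f_R0 (fun j =>
        Binomial.C a i * Binomial.C b j * Mom mu s n' i j * mm mu s (a - i) (b - j)) b) a
  end.

Definition PP n (v : nat -> R) := sumR n v.
Definition QQ n (v : nat -> R) := sumR n (fun i => / v i).

Lemma key_moment mu s (Hs : 0 < s) n : forall a b,
  IterInt n (fun v => PP n v ^ a * QQ n v ^ b * joint_lnpdf mu s n v) (Mom mu s n a b).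
Proof.
  induction n as [|n IH]; intros a b.
  - simpl. unfold PP, QQ, joint_lnpdf. simpl. ring.
  - simpl.
    exists (fun x => sum_f_R0 (fun i => sum_f_R0 (fun j =>
        Binomial.C a i * Binomial.C b j * ff mu s (a - i) (b - j) x * Mom mu s n i j) b) a).
    split.
    + apply ImpInt_sum. intros i _. apply ImpInt_sum. intros j _.
      eapply ImpInt_ext. 2:{ apply ImpInt_scal. apply moment. exact Hs. }
      intros y. simpl. ring.
    + intros x.
      eapply IterInt_ext.
      2:{ apply (IterInt_sum n (fun i v => sum_f_R0 (fun j =>
             (Binomial.C a i * Binomial.C b j * ff mu s (a - i) (b - j) x) * (PP n v ^ i * QQ n v ^ j * joint_lnpdf mu s n v)) b)).
          intros i _. apply IterInt_sum. intros j _. apply IterInt_scal. apply IH. }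
      intros v. simpl.
      unfold PP, QQ, joint_lnpdf. simpl.
      rewrite (sumR_upd_lt v n x (fun y => y)) by lia.
      rewrite (sumR_upd_lt v n x (fun y => / y)) by lia.
      rewrite (prodR_upd_lt v n x (fun y => lnpdf mu s y)) by lia.
      rewrite upd_eq.
      symmetry. change (sumR n (fun i => v i)) with (sumR n v).
      rewrite !binomial.
      rewrite sum_prod.
      apply sum_eq. intros i _. apply sum_eq. intros j _. unfold ff. ring.
Qed.
Section Closed.
Variables mu s : R.
Definition al := exp (mu + s * s / 2).
Definition be := exp (- mu + s * s / 2).

Lemma C00 : Binomial.C 0 0 = 1. Proof. unfold Binomial.C; simpl; field. Qed.
Lemma C10 : Binomial.C 1 0 = 1. Proof. unfold Binomial.C; simpl; field. Qed.
Lemma C11 : Binomial.C 1 1 = 1. Proof. unfold Binomial.C; simpl; field. Qed.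
Lemma C20 : Binomial.C 2 0 = 1. Proof. unfold Binomial.C; simpl; field. Qed.
Lemma C21 : Binomial.C 2 1 = 2. Proof. unfold Binomial.C; simpl; field. Qed.
Lemma C22 : Binomial.C 2 2 = 1. Proof. unfold Binomial.C; simpl; field. Qed.

Ltac mmt := unfold mm, rr, al, be; simpl INR;
  first [ rewrite <- exp_0; f_equal; field | rewrite <- ?exp_plus; f_equal; field ].

Lemma mm00 : mm mu s 0 0 = 1. Proof. mmt. Qed.
Lemma mm10 : mm mu s 1 0 = al. Proof. mmt. Qed.
Lemma mm01 : mm mu s 0 1 = be. Proof. mmt. Qed.
Lemma mm11 : mm mu s 1 1 = 1. Proof. mmt. Qed.
Lemma mm20 : mm mu s 2 0 = al * al * al * be. Proof. mmt. Qed.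
Lemma mm02 : mm mu s 0 2 = al * be * be * be. Proof. mmt. Qed.
Lemma mm21 : mm mu s 2 1 = al. Proof. mmt. Qed.
Lemma mm12 : mm mu s 1 2 = be. Proof. mmt. Qed.
Lemma mm22 : mm mu s 2 2 = 1. Proof. mmt. Qed.

Ltac momt IHn := cbn [Mom sum_f_R0 Nat.sub];
  rewrite ?C00, ?C10, ?C11, ?C20, ?C21, ?C22, ?mm00, ?mm10, ?mm01, ?mm11, ?mm20, ?mm02, ?mm21, ?mm12, ?mm22;
  rewrite ?IHn.

Lemma Mom00 n : Mom mu s n 0 0 = 1.
Proof. induction n as [|n IHn]. simpl; ring. momt IHn. ring. Qed.
Lemma Mom10 n : Mom mu s n 1 0 = INR n * al.
Proof. induction n as [|n IHn]. simpl; ring. momt IHn. rewrite Mom00, S_INR. ring. Qed.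
Lemma Mom01 n : Mom mu s n 0 1 = INR n * be.
Proof. induction n as [|n IHn]. simpl; ring. momt IHn. rewrite Mom00, S_INR. ring. Qed.
Lemma Mom11 n : Mom mu s n 1 1 = INR n * (1 - al * be) + INR n ^ 2 * (al * be).
Proof. induction n as [|n IHn]. simpl; ring. momt IHn. rewrite Mom00, Mom10, Mom01, S_INR. ring. Qed.
Lemma Mom20 n : Mom mu s n 2 0 = INR n * (al ^ 3 * be - al ^ 2) + INR n ^ 2 * al ^ 2.
Proof. induction n as [|n IHn]. simpl; ring. momt IHn. rewrite Mom00, Mom10, S_INR. ring. Qed.
Lemma Mom02 n : Mom mu s n 0 2 = INR n * (al * be ^ 3 - be ^ 2) + INR n ^ 2 * be ^ 2.
Proof. induction n as [|n IHn]. simpl; ring. momt IHn. rewrite Mom00, Mom01, S_INR. ring. Qed.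
Lemma Mom21 n : Mom mu s n 2 1 =
  INR n * (- al - al ^ 3 * be ^ 2 + 2 * al ^ 2 * be)
  + INR n ^ 2 * (2 * al + al ^ 3 * be ^ 2 - 3 * al ^ 2 * be) + INR n ^ 3 * (al ^ 2 * be).
Proof. induction n as [|n IHn]. simpl; ring. momt IHn. rewrite Mom00, Mom10, Mom01, Mom11, Mom20, S_INR. ring. Qed.
Lemma Mom12 n : Mom mu s n 1 2 =
  INR n * (- be - al ^ 2 * be ^ 3 + 2 * al * be ^ 2)
  + INR n ^ 2 * (2 * be + al ^ 2 * be ^ 3 - 3 * al * be ^ 2) + INR n ^ 3 * (al * be ^ 2).
Proof. induction n as [|n IHn]. simpl; ring. momt IHn. rewrite Mom00, Mom10, Mom01, Mom11, Mom02, S_INR. ring. Qed.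
Lemma Mom22 n : Mom mu s n 2 2 =
  INR n * (- 1 + 4 * al * be - al ^ 4 * be ^ 4 + 4 * al ^ 3 * be ^ 3 - 6 * al ^ 2 * be ^ 2)
  + INR n ^ 2 * (2 - 8 * al * be + al ^ 4 * be ^ 4 - 6 * al ^ 3 * be ^ 3 + 11 * al ^ 2 * be ^ 2)
  + INR n ^ 3 * (4 * al * be + 2 * al ^ 3 * be ^ 3 - 6 * al ^ 2 * be ^ 2)
  + INR n ^ 4 * (al ^ 2 * be ^ 2).
Proof.
  induction n as [|n IHn]. simpl; ring. momt IHn.
  rewrite Mom00, Mom10, Mom01, Mom11, Mom20, Mom02, Mom21, Mom12, S_INR. ring.
Qed.

Lemma albe : al * be = exp (s ^ 2).
Proof. unfold al, be. rewrite <- exp_plus. f_equal. field. Qed.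
End Closed.
Lemma khat_eq n v : khat n v = INR n / (INR n - 1) * (PP n v * QQ n v / (INR n * INR n) - 1).
Proof.
  unfold khat, A_n, H_n, PP, QQ. f_equal. f_equal.
  unfold Rdiv. rewrite !Rinv_mult, Rinv_inv. ring.
Qed.

Theorem proposition4 (muY sigmaY : R) (n : nat) :
  0 < sigmaY -> (2 <= n)%nat ->
  let k := exp (sigmaY ^ 2) - 1 in
  exists V : R,
    HasVar muY sigmaY n (khat n) V /\
    V = 2 / (INR n - 1) * k ^ 2 * (1 + k + k ^ 2 / (2 * INR n)) /\
    sqrt V = k * sqrt (2 / (INR n - 1) * (1 + k + k ^ 2 / (2 * INR n))).
Proof.
  intros Hs Hn k.
  assert (HN : 2 <= INR n) by (replace 2 with (INR 2) by (simpl; ring); apply le_INR; exact Hn).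
  set (N := INR n) in *.
  set (c := N / (N - 1)).
  set (M00 := Mom muY sigmaY n 0 0). set (M11 := Mom muY sigmaY n 1 1). set (M22 := Mom muY sigmaY n 2 2).
  set (m1 := c / (N * N) * M11 + - c * M00).
  set (m2 := c * c / (N * N * N * N) * M22 + - (2 * c * c / (N * N)) * M11 + c * c * M00).
  assert (HV : m2 - m1 ^ 2 = 2 / (N - 1) * k ^ 2 * (1 + k + k ^ 2 / (2 * N))).
  { unfold m1, m2, M00, M11, M22, c, k. rewrite Mom00, Mom11, Mom22. rewrite <- (albe muY sigmaY). fold N.
    field. lra. }
  exists (m2 - m1 ^ 2). split; [|split].
  - exists m1, m2. split; [|split].
    + unfold HasExpect.
      eapply IterInt_ext.
      2:{ apply IterInt_plus.
          apply (IterInt_scal n (fun v => PP n v ^ 1 * QQ n v ^ 1 * joint_lnpdf muY sigmaY n v)), key_moment, Hs.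
          apply (IterInt_scal n (fun v => PP n v ^ 0 * QQ n v ^ 0 * joint_lnpdf muY sigmaY n v)), key_moment, Hs. }
      intros v. simpl. rewrite khat_eq. fold N. fold c. field. lra.
    + unfold HasExpect.
      eapply IterInt_ext.
      2:{ apply IterInt_plus. apply IterInt_plus.
          apply (IterInt_scal n (fun v => PP n v ^ 2 * QQ n v ^ 2 * joint_lnpdf muY sigmaY n v)), key_moment, Hs.
          apply (IterInt_scal n (fun v => PP n v ^ 1 * QQ n v ^ 1 * joint_lnpdf muY sigmaY n v)), key_moment, Hs.
          apply (IterInt_scal n (fun v => PP n v ^ 0 * QQ n v ^ 0 * joint_lnpdf muY sigmaY n v)), key_moment, Hs. }
      intros v. simpl. rewrite khat_eq. fold N. fold c. field. lra.
    + reflexivity.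
  - exact HV.
  - rewrite HV.
    assert (Hk : 0 <= k).
    { unfold k. generalize (exp_ineq1_le (sigmaY ^ 2)) (pow2_ge_0 sigmaY). lra. }
    replace (2 / (N - 1) * k ^ 2 * (1 + k + k ^ 2 / (2 * N)))
      with ((k * k) * (2 / (N - 1) * (1 + k + k ^ 2 / (2 * N)))) by (field; lra).
    rewrite sqrt_mult_alt by nra. rewrite sqrt_square by exact Hk. reflexivity.
Qed.
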